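(* Let $X\times G\xrightarrow{\alpha}X$ be a continuous right action of a locally compact Hausdorff group $G$ on a Hausdorff space $X$, and let $H\le G$ be a closed cocompact subgroup (i.e. $G/H$ is compact), with restricted action $\alpha^H$. Then for any closed $F\subseteq X$, $\alpha$ is $F$-proper if and only if $\alpha^H$ is $F$-proper; likewise $\alpha$ is Bourbaki-proper (respectively Palais-proper) if and only if $\alpha^H$ is.
   Context: For $A,B\subseteq X$ set $\langle A:B\rangle_\alpha:=\{g\in G: Bg\cap A\neq\emptyset\}$, and write $A\perp B$ if this set is relatively compact in $G$. The action is Bourbaki-proper if for all $x,x'\in X$ there are neighborhoods $V_x\ni x$, $V_{x'}\ni x'$ with $V_{x'}\perp V_x$. It is Palais-proper if for every $x\in X$ there is a neighborhood $V_x$ such that for every $x'\in X$ there is a neighborhood $V_{x'}$ with $V_x\perp V_{x'}$. For a closed $F\subseteq X$, the action is $F$-proper if for every $x\in X$ there are neighborhoods $V_x\ni x$ and $V_F\supseteq F$ (an open set containing $F$) with $V_F\perp V_x$. *)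

(* Defs.v *)
From HB Require Import structures.
From mathcomp Require Import all_boot all_order all_algebra.
From mathcomp Require Import all_classical topology.
Set Implicit Arguments. Unset Strict Implicit. Unset Printing Implicit Defensive.
Local Open Scope classical_set_scope.

Definition topological_group (G : topologicalType)
  (mul : G -> G -> G) (inv : G -> G) (e : G) : Prop :=
  [/\ (forall a b c, mul a (mul b c) = mul (mul a b) c),
      (forall a, mul e a = a /\ mul a e = a),
      (forall a, mul (inv a) a = e /\ mul a (inv a) = e),
      continuous (fun p : G * G => mul p.1 p.2) &
      continuous inv].

Definition is_subgroup (G : Type) (mul : G -> G -> G) (inv : G -> G) (e : G)
  (H : set G) : Prop :=
  [/\ H e, (forall a b, H a -> H b -> H (mul a b)) & (forall a, H a -> H (inv a))].

(* G/H (left cosets gH, quotient topology) is compact.  Open sets of G/H are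
   exactly the images of open right-H-saturated subsets of G, so compactness of
   the quotient space unfolds to: every cover of G by open H-saturated sets
   has a finite subcover. *)
Definition cocompact (G : topologicalType) (mul : G -> G -> G) (H : set G) : Prop :=
  forall (I : Type) (U : I -> set G),
    (forall i, open (U i)) ->
    (forall i g h, U i g -> H h -> U i (mul g h)) ->
    (forall g, exists i, U i g) ->
    exists D : set I, finite_set D /\ forall g, exists2 i, D i & U i g.

Definition continuous_right_action (X G : topologicalType)
  (mul : G -> G -> G) (e : G) (act : X -> G -> X) : Prop :=
  [/\ (forall x, act x e = x),
      (forall x g h, act (act x g) h = act x (mul g h)) &
      continuous (fun p : X * G => act p.1 p.2)].

Section Proper.
Variables (X G : topologicalType) (act : X -> G -> X) (S : set G).
(* S is the acting (sub)group: the action restricted to S.  Relative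
   compactness is taken in the space S with its subspace topology. *)

Definition transporter (A B : set X) : set G :=
  [set g | S g /\ exists2 b, B b & A (act b g)].

Definition perp (A B : set X) : Prop :=
  @precompact (subspace S) (transporter A B).

Definition bourbaki_proper : Prop :=
  forall x x' : X, exists Vx Vx',
    [/\ nbhs x Vx, nbhs x' Vx' & perp Vx' Vx].

Definition palais_proper : Prop :=
  forall x : X, exists Vx, nbhs x Vx /\
    forall x' : X, exists Vx', nbhs x' Vx' /\ perp Vx Vx'.

Definition F_proper (F : set X) : Prop :=
  forall x : X, exists Vx VF,
    [/\ nbhs x Vx, open VF, F `<=` VF & perp VF Vx].
End Proper.

(* Main.v *)
Require Import Defs.
From HB Require Import structures.
From mathcomp Require Import all_boot all_order all_algebra.
From mathcomp Require Import all_classical topology.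
From mathcomp Require Import finmap.
Set Implicit Arguments. Unset Strict Implicit. Unset Printing Implicit Defensive.
Local Open Scope classical_set_scope.


Definition rc (G : topologicalType) (T : set G) := exists C, compact C /\ T `<=` C.

Lemma precompact_subE (G : topologicalType) (S T : set G) :
  hausdorff_space G -> closed S -> T `<=` S ->
  (@precompact (subspace S) T <-> rc T).
Proof.
move=> hG cS TS; rewrite precompactE closure_subspaceW //.
split.
  move=> /compact_subspaceIP cpt; exists (closure T `&` S); split => //.
  by move=> t Tt; split; [exact: subset_closure|exact: TS].
move=> [C [cC TC]]; apply/compact_subspaceIP.
apply: (subclosed_compact _ cC).
  by apply: closedI => //; exact: closed_closure.
move=> t [clT _]; have cC' : closed C by exact: compact_closed.
by move: (closureS TC clT); rewrite -(closure_id C).1.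
Qed.

Lemma perpE (X G : topologicalType) (act : X -> G -> X) (S : set G) A B :
  hausdorff_space G -> closed S ->
  (perp act S A B <-> rc (transporter act S A B)).
Proof. by move=> hG cS; apply: precompact_subE => // g []. Qed.


Lemma memS (I : eqType) (a k : I) (s : seq I) : k \in s -> k \in a :: s.
Proof. by move=> ks; rewrite inE ks orbT. Qed.

Lemma filter_seqI (T I : eqType) (F : set_system T) (FF : Filter F) (s : seq I) (N : I -> set T) :
  (forall k, k \in s -> F (N k)) -> F [set y | forall k, k \in s -> N k y].
Proof.
elim: s => [|a s IH] H.
  by apply: filterS filterT => y _ k; rewrite in_nil.
have Fa := H a (mem_head _ _).
have Fs := IH (fun k ks => H k (memS a ks)).
apply: filterS (filterI Fa Fs) => y [Na Ns] k; rewrite inE => /orP [/eqP->|] //.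
exact: Ns.
Qed.

Lemma open_seqI (T : topologicalType) (I : eqType) (s : seq I) (N : I -> set T) :
  (forall k, k \in s -> open (N k)) -> open [set y | forall k, k \in s -> N k y].
Proof.
elim: s => [|a s IH] H.
  rewrite (_ : [set y | _] = setT); first exact: openT.
  by apply/seteqP; split => y // _ k; rewrite in_nil.
rewrite (_ : [set y | _] = N a `&` [set y | forall k, k \in s -> N k y]).
  apply: openI; first exact: H (mem_head _ _).
  exact: IH (fun k ks => H k (memS a ks)).
apply/seteqP; split => y.
  by move=> Hy; split => [|k ks]; apply: Hy; rewrite inE ?eqxx ?ks ?orbT.
by move=> [Na Ns] k; rewrite inE => /orP [/eqP->|] //; exact: Ns.
Qed.

Lemma compact_seqU (T : topologicalType) (I : eqType) (s : seq I) (C : I -> set T) :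
  (forall k, k \in s -> compact (C k)) -> compact [set y | exists2 k, k \in s & C k y].
Proof.
elim: s => [|a s IH] H.
  rewrite (_ : [set y | _] = set0); first exact: compact0.
  by apply/seteqP; split => y // [k]; rewrite in_nil.
rewrite (_ : [set y | _] = C a `|` [set y | exists2 k, k \in s & C k y]).
  apply: compactU; first exact: H (mem_head _ _).
  exact: IH (fun k ks => H k (memS a ks)).
apply/seteqP; split => y.
  by move=> [k]; rewrite inE => /orP [/eqP->|ks Cy]; [left|right; exists k].
by move=> [Ca|[k ks Ck]]; [exists a; rewrite ?mem_head|exists k; rewrite // inE ks orbT].
Qed.

Lemma cover_compactG (G : topologicalType) (K : set G) : compact K -> cover_compact K.
Proof.
move=> cK I D f fo KD.
case: (pselect (K !=set0)) => [[k0 _]|K0]; last first.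
  by exists fset0 => // k Kk; exfalso; apply: K0; exists k.
pose GP : ptopologicalType := HB.pack G (isPointed.Build G k0).
have := @compact_cover GP. move=> /(congr1 (fun P => P K)). move=> E. have cK2 : @cover_compact GP K by rewrite -E. exact: cK2 I D f fo KD.
Qed.

Lemma tube (X G : topologicalType) (act : X -> G -> X) (x : X) (K : set G) (Q : G -> set X) :
  continuous (fun p : X * G => act p.1 p.2) -> compact K ->
  (forall k, K k -> nbhs (act x k) (Q k)) ->
  exists s : seq G, exists A, nbhs x A /\
    (forall b g, A b -> K g -> exists2 k, k \in s & Q k (act b g)).
Proof.
move=> cact cK hQ.
have : forall k, exists AB : set X * set G, K k ->
   [/\ nbhs x AB.1, nbhs k AB.2 & forall b g, AB.1 b -> AB.2 g -> Q k (act b g)].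
  move=> k; case: (pselect (K k)) => Kk; last by exists (setT, setT).
  have := cact (x, k) _ (hQ k Kk).
  move=> [[A B] /= [nA nB] AB]; exists (A, B) => _; split => // b g Ab Bg.
  exact: (AB (b, g)).
move=> /choice [f hf].
have := cover_compactG cK (D := K) (f := fun k => (f k).2°).
case.
- by move=> k _; exact: open_interior.
- move=> k Kk; exists k => //; have [_ + _] := hf k Kk.
  by move=> h; exact: h.
move=> D DK0 KD.
have DK : forall k, k \in D -> K k by move=> k /DK0 /set_mem.
exists (D : seq G), [set b | forall k, k \in D -> (f k).1 b]; split.
  by apply: filter_seqI => k kD; have [] := hf k (DK k kD).
move=> b g Ab Kg; have [k kD kg] := KD g Kg.
exists k => //; have [_ _ h] := hf k (DK k kD); apply: h; first exact: Ab.
exact: interior_subset.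
Qed.

Lemma rtrans_cont (G : topologicalType) (mul : G -> G -> G) (c : G) :
  continuous (fun p : G * G => mul p.1 p.2) -> continuous (fun g => mul g c).
Proof.
move=> cm g W nW; have := cm (g, c) _ nW.
move=> [[A B] /= [nA nB] AB]; apply: filterS nA => a Aa.
apply: (AB (a, c)); split => //; exact: nbhs_singleton.
Qed.

Lemma decomp (G : topologicalType) (mul : G -> G -> G) (inv : G -> G) (e : G) (H : set G) :
  topological_group mul inv e -> locally_compact [set: G] ->
  is_subgroup mul inv e H -> cocompact mul H ->
  exists K, compact K /\ forall g, exists k h, [/\ K k, H h & g = mul k h].
Proof.
move=> [mA m1 mV cm _] lc [He HM _] cc.
have : forall x : G, exists N : set G, nbhs x N /\ compact N.
  move=> x; have [U] := lc x I; rewrite withinET => nU [cU _].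
  by exists U.
move=> /choice [N hN].
have := cc G (fun i => [set g | exists w h, [/\ (N i)° w, H h & g = mul w h]]).
case.
- move=> i.
  rewrite (_ : [set g | _] = \bigcup_(h in H) ((fun g => mul g (inv h)) @^-1` (N i)°)).
    apply: bigcup_open => h _; apply: open_comp; last exact: open_interior.
    by move=> g _; exact: rtrans_cont.
  apply/seteqP; split => g.
    move=> [w [h [Nw Hh ->]]]; exists h => //=.
    by rewrite -mA (proj2 (mV h)) (proj2 (m1 w)).
  move=> [h Hh /= Ng]; exists (mul g (inv h)), h; split => //.
  by rewrite -mA (proj1 (mV h)) (proj2 (m1 g)).
- move=> i g h [w [h' [Nw Hh' ->]]] Hh; exists w, (mul h' h); split => //.
    exact: HM.
- move=> g; exists g, g, e; split => //; last by rewrite (proj2 (m1 g)).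
  by have [] := hN g.
move=> D [/finite_fsetP [B ->] hD].
exists [set y | exists2 k, k \in (B : seq G) & N k y]; split.
  by apply: compact_seqU => k _; have [] := hN k.
move=> g; have [i Bi [w [h [Nw Hh ->]]]] := hD g.
exists w, h; split => //; exists i => //.
exact: interior_subset.
Qed.


Lemma compact_mul (G : topologicalType) (mul : G -> G -> G) (A B : set G) :
  continuous (fun p : G * G => mul p.1 p.2) -> compact A -> compact B ->
  compact ((fun p : G * G => mul p.1 p.2) @` (A `*` B)).
Proof.
move=> cm cA cB; apply: continuous_compact; first exact: continuous_subspaceT.
exact: compact_setX.
Qed.

Lemma core1 (X G : topologicalType) (mul : G -> G -> G) (act : X -> G -> X) (H K : set G)
  (s : seq G) (A : set X) (Q T : G -> set X) (C : G -> set G) :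
  continuous (fun p : G * G => mul p.1 p.2) ->
  (forall x g h, act (act x g) h = act x (mul g h)) ->
  compact K -> (forall g, exists k h, [/\ K k, H h & g = mul k h]) ->
  (forall b g, A b -> K g -> exists2 k, k \in s & Q k (act b g)) ->
  (forall k, k \in s -> compact (C k) /\ transporter act H (T k) (Q k) `<=` C k) ->
  rc (transporter act [set: G] [set y | forall k, k \in s -> T k y] A).
Proof.
move=> cm aM cK dec tb hC.
exists ((fun p : G * G => mul p.1 p.2) @` (K `*` [set h | exists2 k, k \in s & C k h])).
split.
  apply: compact_mul => //; apply: compact_seqU => k ks; exact: (hC k ks).1.
move=> g [_ [b Ab Tbg]].
have [k [h [Kk Hh gE]]] := dec g.
have [k' k's Qk'] := tb b k Ab Kk.
exists (k, h) => //; split => //=; exists k' => //.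
apply: (hC k' k's).2; split => //; exists (act b k) => //.
by rewrite aM -gE; exact: Tbg.
Qed.

Lemma core2 (X G : topologicalType) (mul : G -> G -> G) (inv : G -> G) (e : G)
  (act : X -> G -> X) (H K : set G)
  (s : seq G) (A : set X) (Q P : G -> set X) (C : G -> set G) :
  topological_group mul inv e -> (forall a, H a -> H (inv a)) ->
  (forall x g h, act (act x g) h = act x (mul g h)) ->
  compact K -> (forall g, exists k h, [/\ K k, H h & g = mul k h]) ->
  (forall b g, A b -> K g -> exists2 k, k \in s & Q k (act b g)) ->
  (forall k, k \in s -> compact (C k) /\ transporter act H (Q k) (P k) `<=` C k) ->
  rc (transporter act [set: G] A [set y | forall k, k \in s -> P k y]).
Proof.
move=> [mA m1 mV cm cinv] HV aM cK dec tb hC.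
have invK : forall a, inv (inv a) = a.
  move=> a; rewrite -[inv (inv a)](proj2 (m1 _)) -(proj1 (mV a)) mA.
  by rewrite (proj1 (mV (inv a))) (proj1 (m1 a)).
have key : forall k h, mul (inv (mul k h)) k = inv h.
  move=> k h; set z := inv (mul k h).
  rewrite -[mul z k](proj2 (m1 _)) -(proj2 (mV h)) mA -(mA z k h).
  by rewrite (proj1 (mV (mul k h))) (proj1 (m1 _)).
set Cs := [set h | exists2 k, k \in s & C k h].
have cCs : compact Cs by apply: compact_seqU => k ks; exact: (hC k ks).1.
exists (inv @` ((fun p : G * G => mul p.1 p.2) @` (K `*` (inv @` Cs)))).
split.
  apply: continuous_compact; first exact: continuous_subspaceT.
  apply: compact_mul => //; apply: continuous_compact => //.
  exact: continuous_subspaceT.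
move=> g [_ [b Pb Abg]].
have [k [h [Kk Hh gE]]] := dec (inv g).
have [k' k's Qk'] := tb (act b g) k Abg Kk.
have gE' : g = inv (mul k h) by rewrite -gE invK.
exists (mul k h); last by rewrite gE'.
exists (k, h) => //; split => //=; exists (inv h); last exact: invK.
exists k' => //.
apply: (hC k' k's).2; split; first exact: HV.
exists b; first exact: Pb.
by move: Qk'; rewrite aM gE' key.
Qed.

Lemma perp_restrict (X G : topologicalType) (act : X -> G -> X) (H : set G) A B :
  hausdorff_space G -> closed H -> perp act [set: G] A B -> perp act H A B.
Proof.
move=> hG cH /(perpE _ _ _ hG closedT) [C [cC sub]].
apply/(perpE _ _ _ hG cH); exists C; split => // g [Hg r]; exact: sub.
Qed.

Theorem lemma2p5 (X G : topologicalType)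
  (mul : G -> G -> G) (inv : G -> G) (e : G) (act : X -> G -> X) (H : set G) :
  topological_group mul inv e ->
  locally_compact [set: G] -> hausdorff_space G ->
  hausdorff_space X ->
  continuous_right_action mul e act ->
  is_subgroup mul inv e H -> closed H -> cocompact mul H ->
  (forall F : set X, closed F ->
     (F_proper act [set: G] F <-> F_proper act H F)) /\
  (bourbaki_proper act [set: G] <-> bourbaki_proper act H) /\
  (palais_proper act [set: G] <-> palais_proper act H).
Proof.
move=> tg lc hG hX [a1 aM cact] sg cH cc.
have [K [cK dec]] := decomp tg lc sg cc.
have [mA m1 mV cm cinv] := tg.
have [He HM HV] := sg.
split; [|split].
- move=> F cF; split.
    move=> hp x; have [Vx [VF [nx oF FVF p]]] := hp x.
    by exists Vx, VF; split => //; exact: perp_restrict.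
  move=> hp x.
  have hh : forall y : X, exists p : set X * set X * set G,
      [/\ nbhs y p.1.1, open p.1.2, F `<=` p.1.2, compact p.2
        & transporter act H p.1.2 p.1.1 `<=` p.2].
    move=> y; have [Vy [VF [ny oF FVF /(perpE _ _ _ hG cH) [C [cC sub]]]]] := hp y.
    by exists (Vy, VF, C).
  have [f hf] := boolp.choice hh.
  have [s [A [nA tb]]] := tube (Q := fun k => (f (act x k)).1.1) cact cK
    (fun k _ => let: And5 h _ _ _ _ := hf (act x k) in h).
  exists A, [set y | forall k, k \in s -> (f (act x k)).1.2 y]; split => //.
  + by apply: open_seqI => k _; have [] := hf (act x k).
  + by move=> y Fy k _; have [_ _ h _ _] := hf (act x k); apply: h.
  + apply/(perpE _ _ _ hG closedT).
    apply: (core1 (Q := fun k => (f (act x k)).1.1) (C := fun k => (f (act x k)).2)) cm aM cK dec tb _.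
    by move=> k _; have [_ _ _ h1 h2] := hf (act x k); split.
- split.
    move=> hp x x'; have [Vx [Vx' [nx nx' p]]] := hp x x'.
    by exists Vx, Vx'; split => //; exact: perp_restrict.
  move=> hp x x'.
  have hh : forall y : X, exists p : set X * set X * set G,
      [/\ nbhs y p.1.1, nbhs x' p.1.2, compact p.2
        & transporter act H p.1.2 p.1.1 `<=` p.2].
    move=> y; have [Vy [Vy' [ny ny' /(perpE _ _ _ hG cH) [C [cC sub]]]]] := hp y x'.
    by exists (Vy, Vy', C).
  have [f hf] := boolp.choice hh.
  have [s [A [nA tb]]] := tube (Q := fun k => (f (act x k)).1.1) cact cK
    (fun k _ => let: And4 h _ _ _ := hf (act x k) in h).
  exists A, [set y | forall k, k \in s -> (f (act x k)).1.2 y]; split => //.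
  + by apply: filter_seqI => k _; have [] := hf (act x k).
  + apply/(perpE _ _ _ hG closedT).
    apply: (core1 (Q := fun k => (f (act x k)).1.1) (C := fun k => (f (act x k)).2)) cm aM cK dec tb _.
    by move=> k _; have [] := hf (act x k).
- split.
    move=> hp x; have [Vx [nx hx]] := hp x; exists Vx; split => // x'.
    by have [Vx' [nx' p]] := hx x'; exists Vx'; split => //; exact: perp_restrict.
  move=> hp x.
  move: hp; rewrite /palais_proper => /boolp.choice [W hW].
  have [s [A [nA tb]]] := tube (Q := fun k => W (act x k)) cact cK
    (fun k _ => (hW (act x k)).1).
  exists A; split => // x'.
  have hh : forall k : G, exists p : set X * set G,
      [/\ nbhs x' p.1, compact p.2 & transporter act H (W (act x k)) p.1 `<=` p.2].
    move=> k; have [W' [nW' /(perpE _ _ _ hG cH) [C [cC sub]]]] := (hW (act x k)).2 x'.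
    by exists (W', C).
  have [f hf] := boolp.choice hh.
  exists [set y | forall k, k \in s -> (f k).1 y]; split.
    by apply: filter_seqI => k _; have [] := hf k.
  apply/(perpE _ _ _ hG closedT).
  apply: (core2 (Q := fun k => W (act x k)) (P := fun k => (f k).1) (C := fun k => (f k).2)) tg HV aM cK dec tb _.
  by move=> k _; have [_ h1 h2] := hf k; split.
Qed.
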